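(* Let $n$ be a nonnegative integer and let $x$ be a complex number such that no denominator below vanishes. Then \[ \sum_{k=0}^{n}(-1)^k\binom{n}{k} \frac{\binom{\frac{x}{2}+k}{k}\binom{x-\frac{1}{2}+k}{k}}{\binom{\frac{x-1}{2}+k}{k}\binom{x-\frac{1}{2}+n+k}{k}}H_{2k}(x) =4^{n-1}\frac{\binom{\frac{x}{2}-\frac{1}{4}+n}{n}\binom{-\frac{3}{4}+n}{n}}{\binom{\frac{x-1}{2}+n}{n}\binom{x-\frac{1}{2}+2n}{n}} \big\{H_n(\tfrac{x-1}{2})-H_n(-\tfrac{3}{4})\big\} +4^{n-1}\frac{\binom{\frac{x}{2}-\frac{3}{4}+n}{n}\binom{-\frac{5}{4}+n}{n}}{\binom{\frac{x-1}{2}+n}{n}\binom{x-\frac{1}{2}+2n}{n}} \big\{H_n(\tfrac{x-1}{2})-H_n(-\tfrac{5}{4})\big\}. \]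
   Context: For complex $z$ and a nonnegative integer $k$, $\binom{z}{k}=\frac{z(z-1)\cdots(z-k+1)}{k!}$ (with $\binom{z}{0}=1$). For complex $x$ and nonnegative integer $m$, $H_0(x)=0$ and $H_m(x)=\sum_{j=1}^m\frac{1}{x+j}$ for $m\ge1$. The parameter $x$ is assumed to be such that all denominators are nonzero. *)

(* Defs.v *)
From mathcomp Require Import all_boot all_order all_algebra.
From mathcomp Require Import complex.
From mathcomp Require Import reals.
Set Implicit Arguments. Unset Strict Implicit. Unset Printing Implicit Defensive.
Import Order.TTheory GRing.Theory Num.Theory.
Local Open Scope ring_scope.

Definition gbinom {F : fieldType} (z : F) (k : nat) : F :=
  (\prod_(i < k) (z - i%:R)) / (k`!)%:R.

Definition harm {F : fieldType} (m : nat) (x : F) : F :=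
  \sum_(1 <= j < m.+1) (x + j%:R)^-1.

(* Main.v *)
Require Import Defs.
From mathcomp Require Import all_boot all_order all_algebra.
From mathcomp Require Import complex reals.
From mathcomp Require Import ring lra.
Import GRing.Theory Num.Theory.
Local Open Scope ring_scope.

Ltac nzsplit := repeat (apply/andP; split); rewrite // ?oner_neq0.

Section Alg.
Variable F : fieldType.
Variables (a N K d hk : F).
Notation c := (a / 2%:R + 3%:R / 4%:R).
Notation e := (a / 2%:R + 1 / 4%:R).
Notation A := (1 / 4%:R + N).
Notation B := (N - 1 / 4%:R).
Definition al := (1 + a/2%:R + N) * (e + N) / ((1 + a + N) * A).
Definition alp := (1 + a/2%:R + N) / (1 + a + N) * (- 1 / A + (e + N) / A^+2).
Definition rho (k : F) := - k * (a - c + k) * (1 + a + N + k) / (2%:R * (N + 1) * (1 + a + N) * A).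
Definition rhop (k : F) := - k * (1 + a + N + k) / (2%:R * (N + 1) * (1 + a + N)) * (- 1 / A + (a - c + k) / A^+2).
Definition be := (e + N) * ((1 + a)/2%:R + N) / ((1 + a + N) * B).
Definition bep := ((1 + a)/2%:R + N) / (1 + a + N) * (- 1 / B + (e + N) / B^+2).
Definition sig (k : F) := - k * (a - c + k) * (1 + a + N + k) * (a + 2%:R * k - 1) / (2%:R * a * (N + 1) * (1 + a + N) * B).
Definition sigp (k : F) := - k * (1 + a + N + k) * (a + 2%:R * k - 1) / (2%:R * a * (N + 1) * (1 + a + N)) * (- 1 / B + (a - c + k) / B^+2).
Definition Dn := d * (N + 1 - K) * (1 + a + N + K) / ((N + 1) * (1 + a + N)).
Definition d1 := d * (a + K) * (K - N - 1) * (c + K) / ((K + 1) * (2%:R + a + N + K) * (e + K)).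
Definition hk1 := hk + (c + K)^-1 + (e + K)^-1.

Hypothesis h2 : 2%:R != 0 :> F.
Hypothesis h4 : 4%:R != 0 :> F.
Hypothesis hA : 1 + N * 4%:R != 0.
Hypothesis hB : N * 4%:R - 1 != 0.
Hypothesis ha : a != 0.
Hypothesis hN1 : N + 1 != 0.
Hypothesis hK1 : K + 1 != 0.
Hypothesis haN : 1 + a + N != 0.
Hypothesis haNK : 2%:R + a + N + K != 0.
Hypothesis heK : a * 4%:R + 2%:R + K * 8%:R != 0.
Hypothesis hcK : a * 4%:R + 6%:R + K * 8%:R != 0.

Lemma D0 : al * d - Dn = d1 * rho (K + 1) - d * rho K.
Proof. rewrite /al /Dn /d1 /rho. field. nzsplit. Qed.
Lemma E0 : be * ((a + 2%:R * K)/a * d) - (a + 2%:R * K)/a * Dn = d1 * sig (K + 1) - d * sig K.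
Proof. rewrite /be /Dn /d1 /sig. field. nzsplit. Qed.
Lemma HD : al * d * hk - Dn * hk + alp * d = d1 * (rho (K+1) * hk1 + rhop (K+1)) - d * (rho K * hk + rhop K).
Proof. rewrite /al /alp /Dn /d1 /rho /rhop /hk1. field. nzsplit. Qed.
Lemma HE : be * ((a + 2%:R * K)/a * d) * hk - (a + 2%:R * K)/a * Dn * hk + bep * ((a + 2%:R * K)/a * d) = d1 * (sig (K+1) * hk1 + sigp (K+1)) - d * (sig K * hk + sigp K).
Proof. rewrite /be /bep /Dn /d1 /sig /sigp /hk1. field. nzsplit. Qed.
End Alg.
Arguments al {F}. Arguments alp {F}. Arguments rho {F}. Arguments rhop {F}. Arguments be {F}. Arguments bep {F}. Arguments sig {F}. Arguments sigp {F}. Arguments Dn {F}. Arguments d1 {F}. Arguments hk1 {F}.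

Definition poch {F : fieldType} (z : F) (k : nat) : F := \prod_(i < k) (z + i%:R).

Lemma pochS {F : fieldType} (z : F) k : poch z k.+1 = poch z k * (z + k%:R).
Proof. by rewrite /poch big_ord_recr. Qed.
Lemma pochSl {F : fieldType} (z : F) k : poch z k.+1 = z * poch (z + 1) k.
Proof.
rewrite /poch big_ord_recl /= addr0; congr (_ * _); apply: eq_bigr => i _.
by rewrite /bump /= mulrS; ring.
Qed.
Lemma poch0 {F : fieldType} (z : F) : poch z 0 = 1.
Proof. by rewrite /poch big_ord0. Qed.
Lemma poch_neq0 {F : fieldType} (z : F) k :
  (forall i, (i < k)%N -> z + i%:R != 0) -> poch z k != 0.
Proof. by move=> H; apply/prodf_neq0 => i _; apply: H. Qed.
Lemma poch_negn {F : fieldType} m k : (m < k)%N -> poch (- m%:R : F) k = 0.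
Proof. by move=> H; rewrite /poch (bigD1 (Ordinal H)) //= addNr mul0r. Qed.

Section Gen.
Variable F : fieldType.
Variable a : F.
Hypothesis hch : forall m, (m.+1)%:R != 0 :> F.
Hypothesis hg : forall m, 2%:R * a + m%:R != 0.

Lemma nzs (r y : F) (m : nat) : r != 0 -> y = r * (2%:R * a + m%:R) -> y != 0.
Proof. by move=> hr ->; rewrite mulf_neq0 // hg. Qed.
Lemma h2 : 2%:R != 0 :> F. Proof. exact: hch 1. Qed.
Lemma h4 : 4%:R != 0 :> F. Proof. exact: hch 3. Qed.
Lemma h8 : 8%:R != 0 :> F. Proof. exact: hch 7. Qed.
Lemma hnat m : (m.+1)%:R != 0 :> F. Proof. exact: hch. Qed.

Lemma nz_a m : a + m%:R != 0.
Proof.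
rewrite (_ : a + m%:R = 2%:R^-1 * (2%:R * a + (2 * m)%N%:R)).
  by rewrite mulf_neq0 ?hg // invr_eq0 h2.
rewrite natrM. field. by rewrite h2.
Qed.

Notation c := (a / 2%:R + 3%:R / 4%:R).
Notation e := (a / 2%:R + 1 / 4%:R).

Lemma natS m : (m.+1)%:R = m%:R + 1 :> F. Proof. by rewrite mulrSr. Qed.

Lemma nz_fact k : (k`!)%:R != 0 :> F.
Proof. by rewrite -(prednK (fact_gt0 k)) hch. Qed.
Lemma nz_c m : c + m%:R != 0.
Proof.
rewrite (_ : c + m%:R = 4%:R^-1 * (2%:R * a + (3 + 4 * m)%N%:R)).
  by rewrite mulf_neq0 ?hg // invr_eq0 h4.
rewrite natrD natrM. field. by rewrite h2 h4.
Qed.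
Lemma nz_e m : e + m%:R != 0.
Proof.
rewrite (_ : e + m%:R = 4%:R^-1 * (2%:R * a + (1 + 4 * m)%N%:R)).
  by rewrite mulf_neq0 ?hg // invr_eq0 h4.
rewrite natrD natrM. field. by rewrite h2 h4.
Qed.
Lemma nz_1a m : 1 + a + m%:R != 0.
Proof. rewrite (_ : 1 + a + m%:R = a + (m.+1)%:R) ?nz_a //. rewrite natS; ring. Qed.
Lemma nz_pa k : poch a k != 0. Proof. by apply: poch_neq0 => i _; apply: nz_a. Qed.
Lemma nz_pc k : poch c k != 0. Proof. by apply: poch_neq0 => i _; apply: nz_c. Qed.
Lemma nz_pe k : poch e k != 0. Proof. by apply: poch_neq0 => i _; apply: nz_e. Qed.
Lemma nz_p1a m k : poch (1 + a + m%:R) k != 0.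
Proof. apply: poch_neq0 => i _. rewrite -addrA -natrD. exact: nz_1a. Qed.

Definition D m k := poch a k * poch (- m%:R) k * poch c k / ((k`!)%:R * poch (1 + a + m%:R) k * poch e k).

Lemma D_rec m k : D m k.+1 = D m k * ((a + k%:R) * (k%:R - m%:R) * (c + k%:R) / ((k%:R + 1) * (1 + a + m%:R + k%:R) * (e + k%:R))).
Proof. rewrite /D mulf_div; congr (_ / _); rewrite !pochS ?factS ?natrM ?natS; ring. Qed.

Lemma D_d1 n k : D n.+1 k.+1 = d1 a n%:R k%:R (D n.+1 k).
Proof. rewrite D_rec /d1 !mulrA. congr (_ * _ * _ * _ / _); rewrite ?natS; ring. Qed.

Lemma R1 n k : poch (- n%:R) k = poch (- n.+1%:R : F) k * (n%:R + 1 - k%:R) / (n%:R + 1).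
Proof.
have E1 := pochSl (- n.+1%:R : F) k; rewrite pochS in E1.
rewrite (_ : - n.+1%:R + 1 = - n%:R :> F) in E1; last by rewrite natS; ring.
apply: (mulIf (x := n%:R + 1)); first by rewrite -natS hch.
rewrite mulfVK -?natS ?hch //.
apply: (mulfI (x := -1)); first by rewrite oppr_eq0 oner_neq0.
rewrite (_ : -1 * (poch (- n%:R) k * n.+1%:R) = - n.+1%:R * poch (- n%:R) k); last by ring.
by rewrite -E1 natS; ring.
Qed.

Lemma R2 n k : poch (1 + a + n%:R) k = (1 + a + n%:R) * poch (1 + a + n.+1%:R) k / (1 + a + n%:R + k%:R).
Proof.
have E1 := pochSl (1 + a + n%:R) k; rewrite pochS in E1.
rewrite (_ : 1 + a + n%:R + 1 = 1 + a + n.+1%:R) in E1; last by rewrite natS; ring.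
rewrite -E1 mulfK //. rewrite -addrA -natrD. exact: nz_1a.
Qed.

Lemma nz_n1 n : n%:R + 1 != 0 :> F. Proof. by rewrite -natS hch. Qed.
Lemma nz_1an1 n : 1 + a + (n%:R + 1) != 0. Proof. by rewrite -natS nz_1a. Qed.
Lemma nz_p1an1 n k : poch (1 + a + (n%:R + 1)) k != 0. Proof. by rewrite -natS nz_p1a. Qed.
Lemma nz_1ank n k : 1 + a + n%:R + k%:R != 0. Proof. by rewrite -addrA -natrD nz_1a. Qed.
Lemma nz_ak n : a + n%:R != 0. Proof. exact: nz_a. Qed.

Lemma nz_A n : 1 + n%:R * 4%:R != 0 :> F.
Proof. by rewrite -natrM addrC -natS hch. Qed.
Lemma nz_B n : n%:R * 4%:R - 1 != 0 :> F.
Proof.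
case: n => [|m]; first by rewrite mul0r sub0r oppr_eq0 oner_neq0.
rewrite (_ : m.+1%:R * 4%:R - 1 = (4 * m + 2)%N.+1%:R :> F) ?hch //.
rewrite !natS natrD natrM; ring.
Qed.
Lemma nz_2ank n k : 2%:R + a + n%:R + k%:R != 0 :> F.
Proof. rewrite (_ : 2%:R + a + n%:R + k%:R = a + (2 + n + k)%N%:R) ?nz_a //. rewrite !natrD; ring. Qed.
Lemma nz_eK k : a * 4%:R + 2%:R + k%:R * 8%:R != 0.
Proof.
rewrite (_ : a * 4%:R + 2%:R + k%:R * 8%:R = 2%:R * (2%:R * a + (1 + 4 * k)%N%:R)).
  by rewrite mulf_neq0 ?hg ?h2.
rewrite natrD natrM; ring.
Qed.
Lemma nz_cK k : a * 4%:R + 6%:R + k%:R * 8%:R != 0.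
Proof.
rewrite (_ : a * 4%:R + 6%:R + k%:R * 8%:R = 2%:R * (2%:R * a + (3 + 4 * k)%N%:R)).
  by rewrite mulf_neq0 ?hg ?h2.
rewrite natrD natrM; ring.
Qed.
Lemma nz_a0 : a != 0. Proof. by have := nz_a 0; rewrite addr0. Qed.

Ltac nzt := repeat (apply/andP; split);
  try (first [ exact: nz_1a | exact: nz_n1 | exact: nz_pe | exact: nz_pa | exact: nz_pc
             | exact: nz_p1an1 | exact: nz_p1a | exact: nz_fact | exact: nz_1ank | exact: nz_1an1
             | exact: h2 | exact: h4 | exact: oner_neq0 | exact: nz_a | exact: nz_c | exact: nz_e | exact: hnat | exact: nz_A | exact: nz_B | exact: nz_2ank | exact: nz_eK | exact: nz_cK | exact: nz_a0]).

Lemma D_Dn n k : D n k = Dn a n%:R k%:R (D n.+1 k).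
Proof.
rewrite /D /Dn R1 R2 natS. field.
nzt. Qed.


Definition hh k := \sum_(i < k) ((c + i%:R)^-1 + (e + i%:R)^-1).
Lemma hh_S k : hh k.+1 = hk1 a k%:R (hh k).
Proof. by rewrite /hh big_ord_recr /= /hk1 addrA. Qed.
Lemma hh0 : hh 0 = 0. Proof. by rewrite /hh big_ord0. Qed.

Lemma D_last n : D n n.+1 = 0.
Proof. by rewrite /D (@poch_negn F n n.+1) // mulr0 !mul0r. Qed.
Lemma D00 : D 0 0 = 1.
Proof. by rewrite /D !poch0 /= !mulr1 invr1 mulr1. Qed.

Lemma sum_tele (f g : nat -> F) m : (forall k, (k < m)%N -> f k = g k.+1 - g k) ->
  \sum_(k < m) f k = g m - g 0%N.
Proof.
move=> H; rewrite -(big_mkord xpredT); by apply: telescope_sumr_eq => // k /andP[_ hk]; apply: H.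
Qed.

Definition sD n := \sum_(k < n.+1) D n k.

Lemma sD_rec n : al a n%:R * sD n.+1 = sD n.
Proof.
apply/eqP; rewrite -subr_eq0; apply/eqP.
rewrite /sD mulr_sumr.
rewrite [X in _ - X](_ : _ = \sum_(k < n.+2) D n k); last by rewrite [RHS]big_ord_recr /= D_last addr0.
rewrite -sumrB (sum_tele (fun k => al a n%:R * D n.+1 k - D n k) (fun k => D n.+1 k * rho a n%:R k%:R)).
  by rewrite /rho oppr0 !mul0r mulr0 (D_last n.+1) mul0r subr0.
move=> k _; rewrite (D_Dn n k) D_d1 (natS k).
by apply: D0; nzt.
Qed.


Lemma nz_ha m : 1 + a / 2%:R + m%:R != 0.
Proof.
rewrite (_ : 1 + a / 2%:R + m%:R = 4%:R^-1 * (2%:R * a + (4 + 4 * m)%N%:R)).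
  by rewrite mulf_neq0 ?hg // invr_eq0 h4.
rewrite natrD natrM. field. by rewrite h2 h4.
Qed.
Lemma nz_ha2 m : (1 + a) / 2%:R + m%:R != 0.
Proof.
rewrite (_ : (1 + a) / 2%:R + m%:R = 4%:R^-1 * (2%:R * a + (2 + 4 * m)%N%:R)).
  by rewrite mulf_neq0 ?hg // invr_eq0 h4.
rewrite natrD natrM. field. by rewrite h2 h4.
Qed.
Lemma nz_q1 m : 1 / 4%:R + m%:R != 0 :> F.
Proof.
rewrite (_ : 1 / 4%:R + m%:R = 4%:R^-1 * (1 + 4 * m)%N%:R).
  by rewrite mulf_neq0 ?(hch (4 * m)) // invr_eq0 h4.
rewrite natrD natrM. field. by rewrite h4.
Qed.
Lemma nz_q2 m : - (1 / 4%:R) + m%:R != 0 :> F.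
Proof.
case: m => [|m]; first by rewrite addr0 oppr_eq0 mulf_neq0 ?oner_neq0 // invr_eq0 h4.
rewrite (_ : - (1 / 4%:R) + m.+1%:R = 4%:R^-1 * (3 + 4 * m)%N%:R).
  by rewrite mulf_neq0 ?(hch (2 + 4 * m)) // invr_eq0 h4.
rewrite natS natrD natrM. field. by rewrite h4.
Qed.
Lemma nz_pha k : poch (1 + a / 2%:R) k != 0. Proof. by apply: poch_neq0 => i _; apply: nz_ha. Qed.
Lemma nz_pha2 k : poch ((1 + a) / 2%:R) k != 0. Proof. by apply: poch_neq0 => i _; apply: nz_ha2. Qed.
Lemma nz_pq1 k : poch (1 / 4%:R) k != 0 :> F. Proof. by apply: poch_neq0 => i _; apply: nz_q1. Qed.
Lemma nz_pq2 k : poch (- (1 / 4%:R)) k != 0 :> F. Proof. by apply: poch_neq0 => i _; apply: nz_q2. Qed.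

Lemma nz_x1 n : 2%:R + a + n%:R * 2%:R != 0.
Proof.
rewrite (_ : 2%:R + a + n%:R * 2%:R = 2%:R^-1 * (2%:R * a + (4 + 4 * n)%N%:R)).
  by rewrite mulf_neq0 ?hg // invr_eq0 h2.
rewrite natrD natrM. field. by rewrite h2.
Qed.
Lemma nz_x2 n : 1 + a + n%:R * 2%:R != 0.
Proof.
rewrite (_ : 1 + a + n%:R * 2%:R = 2%:R^-1 * (2%:R * a + (2 + 4 * n)%N%:R)).
  by rewrite mulf_neq0 ?hg // invr_eq0 h2.
rewrite natrD natrM. field. by rewrite h2.
Qed.
Ltac nzt2 := nzt; try (first [exact: nz_x1 | exact: nz_x2 | exact: nz_pha | exact: nz_pha2 | exact: nz_pq1 | exact: nz_pq2
  | exact: nz_ha | exact: nz_ha2 | exact: nz_q1 | exact: nz_q2]).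

Definition Dix n := poch (1 + a) n * poch (1 / 4%:R) n / (poch (1 + a / 2%:R) n * poch e n).
Definition Dg n := poch (1 + a) n * poch (- (1 / 4%:R)) n / (poch e n * poch ((1 + a) / 2%:R) n).

Lemma Dix_S n : Dix n = al a n%:R * Dix n.+1.
Proof. rewrite /Dix /al !pochS. field. nzt2. Qed.
Lemma Dg_S n : Dg n = be a n%:R * Dg n.+1.
Proof. rewrite /Dg /be !pochS. field. nzt2. Qed.


Lemma nz_q3 n : n%:R - 1 / 4%:R != 0 :> F. Proof. by rewrite addrC nz_q2. Qed.
Lemma al_neq0 n : al a n%:R != 0.
Proof. rewrite /al; apply: mulf_neq0; [apply: mulf_neq0|rewrite invr_eq0; apply: mulf_neq0]; nzt2. Qed.
Lemma be_neq0 n : be a n%:R != 0.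
Proof. rewrite /be; apply: mulf_neq0; [apply: mulf_neq0|rewrite invr_eq0; apply: mulf_neq0]; nzt2; exact: nz_q3. Qed.

Lemma Dix0 : Dix 0 = 1. Proof. by rewrite /Dix !poch0 !(mulr1, invr1). Qed.
Lemma Dg0 : Dg 0 = 1. Proof. by rewrite /Dg !poch0 !(mulr1, invr1). Qed.

Lemma sD_Dix n : sD n = Dix n.
Proof.
elim: n => [|n IH]; first by rewrite /sD big_ord1 D00 Dix0.
by apply: (mulfI (al_neq0 n)); rewrite sD_rec IH Dix_S.
Qed.

Definition sE n := \sum_(k < n.+1) (a + 2%:R * k%:R) / a * D n k.

Lemma sE_rec n : be a n%:R * sE n.+1 = sE n.
Proof.
apply/eqP; rewrite -subr_eq0; apply/eqP.
rewrite /sE mulr_sumr.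
rewrite [X in _ - X](_ : _ = \sum_(k < n.+2) (a + 2%:R * k%:R) / a * D n k); last by rewrite [RHS]big_ord_recr /= D_last mulr0 addr0.
rewrite -sumrB (sum_tele (fun k => be a n%:R * ((a + 2%:R * k%:R) / a * D n.+1 k) - (a + 2%:R * k%:R) / a * D n k) (fun k => D n.+1 k * sig a n%:R k%:R)).
  by rewrite /sig oppr0 !mul0r mulr0 (D_last n.+1) mul0r subr0.
move=> k _; rewrite (D_Dn n k) D_d1 (natS k).
by apply: E0; nzt2.
Qed.

Lemma sE_Dg n : sE n = Dg n.
Proof.
elim: n => [|n IH]; first by rewrite /sE big_ord1 D00 Dg0 /= mulr0n mulr0 addr0 divff ?nz_a0 // mulr1.
by apply: (mulfI (be_neq0 n)); rewrite sE_rec IH Dg_S.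
Qed.

Definition u n := \sum_(k < n.+1) D n k * hh k.
Definition lam n := \sum_(i < n) ((e + i%:R)^-1 - (1 / 4%:R + i%:R)^-1).

Lemma u_rec n : al a n%:R * u n.+1 - u n + alp a n%:R * sD n.+1 = 0.
Proof.
rewrite /u /sD !mulr_sumr.
rewrite [X in _ - X + _](_ : _ = \sum_(k < n.+2) D n k * hh k); last by rewrite [RHS]big_ord_recr /= D_last mul0r addr0.
rewrite -sumrB -big_split /=.
rewrite (sum_tele (fun k => al a n%:R * (D n.+1 k * hh k) - D n k * hh k + alp a n%:R * D n.+1 k) (fun k => D n.+1 k * (rho a n%:R k%:R * hh k + rhop a n%:R k%:R))).
  by rewrite (D_last n.+1) /rho /rhop !(mulr0n, oppr0, mul0r, mulr0, addr0, subr0).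
move=> k _; rewrite (D_Dn n k) D_d1 hh_S (natS k).
rewrite -(@HD F a n%:R k%:R (D n.+1 k) (hh k)); first by ring.
all: nzt2.
Qed.

Lemma u_closed n : u n = Dix n * lam n.
Proof.
elim: n => [|n IH]; first by rewrite /u big_ord1 hh0 mulr0 /lam big_ord0 mulr0.
apply: (mulfI (al_neq0 n)).
have H := u_rec n.
have H' : al a n%:R * u n.+1 = u n - alp a n%:R * sD n.+1 + (al a n%:R * u n.+1 - u n + alp a n%:R * sD n.+1) by ring.
rewrite H' H addr0 IH sD_Dix Dix_S /lam big_ord_recr /=.
rewrite /al /alp. field. nzt2.
Qed.

Definition v n := \sum_(k < n.+1) (a + 2%:R * k%:R) / a * D n k * hh k.
Definition mu n := \sum_(i < n) ((e + i%:R)^-1 - (- (1 / 4%:R) + i%:R)^-1).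

Lemma v_rec n : be a n%:R * v n.+1 - v n + bep a n%:R * sE n.+1 = 0.
Proof.
rewrite /v /sE !mulr_sumr.
rewrite [X in _ - X + _](_ : _ = \sum_(k < n.+2) (a + 2%:R * k%:R) / a * D n k * hh k); last by rewrite [RHS]big_ord_recr /= D_last mulr0 mul0r addr0.
rewrite -sumrB -big_split /=.
rewrite (sum_tele (fun k => be a n%:R * ((a + 2%:R * k%:R) / a * D n.+1 k * hh k) - (a + 2%:R * k%:R) / a * D n k * hh k + bep a n%:R * ((a + 2%:R * k%:R) / a * D n.+1 k)) (fun k => D n.+1 k * (sig a n%:R k%:R * hh k + sigp a n%:R k%:R))).
  by rewrite (D_last n.+1) /sig /sigp !(mulr0n, oppr0, mul0r, mulr0, addr0, subr0).
move=> k _; rewrite (D_Dn n k) D_d1 hh_S (natS k).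
rewrite -(@HE F a n%:R k%:R (D n.+1 k) (hh k)); first by ring.
all: nzt2.
Qed.

Lemma v_closed n : v n = Dg n * mu n.
Proof.
elim: n => [|n IH]; first by rewrite /v big_ord1 hh0 mulr0 /mu big_ord0 mulr0.
apply: (mulfI (be_neq0 n)).
have H := v_rec n.
have H' : be a n%:R * v n.+1 = v n - bep a n%:R * sE n.+1 + (be a n%:R * v n.+1 - v n + bep a n%:R * sE n.+1) by ring.
rewrite H' H addr0 IH sE_Dg Dg_S /mu big_ord_recr /=.
rewrite /be /bep. field. nzt2. by rewrite addrC nz_B.
Qed.

End Gen.
Arguments D {F}. Arguments hh {F}. Arguments Dix {F}. Arguments Dg {F}. Arguments sD {F}.
Arguments sE {F}. Arguments u {F}. Arguments v {F}. Arguments lam {F}. Arguments mu {F}.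

Lemma natS1 {F : fieldType} m : (m.+1)%:R = 1 + m%:R :> F. Proof. by rewrite mulrS. Qed.

Lemma prod_rev {F : fieldType} (z : F) k :
  \prod_(i < k) (z + k%:R - i%:R) = poch (z + 1) k.
Proof.
elim: k => [|k IH]; first by rewrite big_ord0 poch0.
rewrite big_ord_recl pochS -IH /=.
rewrite (eq_bigr (fun i : 'I_k => z + k%:R - i%:R)); last first.
  by move=> i _; rewrite /bump /= !natS; ring.
by rewrite natS; ring.
Qed.

Lemma gbinom_poch {F : fieldType} (z : F) k : gbinom (z + k%:R) k = poch (z + 1) k / (k`!)%:R.
Proof. by rewrite /gbinom prod_rev. Qed.

Lemma signbin {F : fieldType} (n k : nat) : (k`!)%:R != 0 :> F -> (k.+1)%:R != 0 :> F ->
  (-1) ^+ k * ('C(n, k))%:R = poch (- n%:R : F) k / (k`!)%:R -> 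
  (-1) ^+ k.+1 * ('C(n, k.+1))%:R = poch (- n%:R : F) k.+1 / (k.+1`!)%:R.
Proof.
move=> hf hk1 IH.
case: (leqP k n) => hkn; last first.
  rewrite bin_small //; last exact: ltnW.
  by rewrite (_ : poch (- n%:R : F) k.+1 = 0) ?mulr0 ?mul0r //; apply: poch_negn; apply: ltnW.
have E : ('C(n, k.+1))%:R = (n%:R - k%:R) * ('C(n, k))%:R / (k.+1)%:R :> F.
  apply: (mulIf hk1); rewrite mulfVK // mulrC -natrM mul_bin_left natrM natrB //.
rewrite E (_ : (-1) ^+ k.+1 * ((n%:R - k%:R) * 'C(n, k)%:R / k.+1%:R) =
   ((-1) ^+ k * 'C(n, k)%:R) * ((k%:R - n%:R) / k.+1%:R)); last by rewrite exprS; ring.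
rewrite IH pochS factS natrM. field. by rewrite hf -natS1 hk1.
Qed.

Definition LHSf {F : fieldType} (n : nat) (x : F) : F :=
  \sum_(0 <= k < n.+1)
     (-1) ^+ k * (('C(n, k))%:R : F)
     * (gbinom (x / 2%:R + k%:R) k * gbinom (x - 1 / 2%:R + k%:R) k)
     / (gbinom ((x - 1) / 2%:R + k%:R) k * gbinom (x - 1 / 2%:R + n%:R + k%:R) k)
     * harm (2 * k) x.

Definition RHSf {F : fieldType} (n : nat) (x : F) : F :=
  (4%:R : F) ^ (n%:Z - 1)
     * (gbinom (x / 2%:R - 1 / 4%:R + n%:R) n * gbinom (- (3%:R / 4%:R) + n%:R) n)
     / (gbinom ((x - 1) / 2%:R + n%:R) n * gbinom (x - 1 / 2%:R + (2 * n)%:R) n)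
     * (harm n ((x - 1) / 2%:R) - harm n (- (3%:R / 4%:R)))
  + (4%:R : F) ^ (n%:Z - 1)
     * (gbinom (x / 2%:R - 3%:R / 4%:R + n%:R) n * gbinom (- (5%:R / 4%:R) + n%:R) n)
     / (gbinom ((x - 1) / 2%:R + n%:R) n * gbinom (x - 1 / 2%:R + (2 * n)%:R) n)
     * (harm n ((x - 1) / 2%:R) - harm n (- (5%:R / 4%:R))).

Section Main.
Variable F : fieldType.
Variable x : F.
Hypothesis hch : forall m, (m.+1)%:R != 0 :> F.
Hypothesis hgx : forall m, 2%:R * x + (m.+1)%:R != 0.

Notation a := (x + 1 / 2%:R).
Lemma two_nz : 2%:R != 0 :> F. Proof. exact: (@h2 F hch). Qed.
Lemma four_nz : 4%:R != 0 :> F. Proof. exact: (@h4 F hch). Qed.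
Lemma hg : forall m, 2%:R * a + m%:R != 0.
Proof. move=> m; rewrite (_ : 2%:R * a + m%:R = 2%:R * x + m.+1%:R) ?hgx //.
rewrite natS1. field. exact: two_nz. Qed.

Lemma signbin' n k : (-1) ^+ k * ('C(n, k))%:R = poch (- n%:R : F) k / (k`!)%:R.
Proof.
elim: k => [|k IH]; first by rewrite expr0 bin0 poch0 /= !(mul1r, invr1).
by apply: signbin IH; [exact: nz_fact | exact: hch].
Qed.

Lemma nz_xj j : x + (j.+1)%:R != 0.
Proof.
rewrite (_ : x + (j.+1)%:R = 2%:R^-1 * (2%:R * x + (2 * j + 1)%N.+1%:R)).
  by rewrite mulf_neq0 ?hgx // invr_eq0 two_nz.
rewrite !natS1 natrD natrM. field. exact: two_nz.
Qed.

Lemma harm2 k : harm (2 * k) x = hh a k / 2%:R.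
Proof.
elim: k => [|k IH]; first by rewrite /harm big_geq // hh0 mul0r.
rewrite /harm (_ : (2 * k.+1).+1 = (2 * k).+3)%N; last by rewrite mulnS.
rewrite big_nat_recr // big_nat_recr // -/(harm (2 * k) x) IH hh_S /hk1.
have H3 : x * 2%:R + 1 + 1 + k%:R * 4%:R != 0.
  by rewrite (_ : x * 2%:R + 1 + 1 + k%:R * 4%:R = 2%:R * x + (4 * k + 1)%N.+1%:R) ?hgx // (natS1 (4 * k + 1)) natrD natrM; ring.
have H4 : x * 2%:R + 1 + 3%:R + k%:R * 4%:R != 0.
  by rewrite (_ : x * 2%:R + 1 + 3%:R + k%:R * 4%:R = 2%:R * x + (4 * k + 3)%N.+1%:R) ?hgx // (natS1 (4 * k + 3)) natrD natrM; ring.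
have H1 := nz_xj (2 * k).
have H2 := nz_xj (2 * k).+1.
rewrite /= (natS1 (2 * k).+1) (natS1 (2 * k)) natrM in H1 H2 *. field.
by rewrite two_nz four_nz H1 H2 H3 H4.
Qed.

Lemma hgA : forall m, 2%:R * a + m%:R != 0. Proof. exact: hg. Qed.
Lemma npa k : poch a k != 0. Proof. exact: (@nz_pa F a hch hgA). Qed.
Lemma npc k : poch (a / 2%:R + 3%:R / 4%:R) k != 0. Proof. exact: (@nz_pc F a hch hgA). Qed.
Lemma npe k : poch (a / 2%:R + 1 / 4%:R) k != 0. Proof. exact: (@nz_pe F a hch hgA). Qed.
Lemma np1a m k : poch (1 + a + m%:R) k != 0. Proof. exact: (@nz_p1a F a hch hgA). Qed.
Lemma nfact k : (k`!)%:R != 0 :> F. Proof. exact: (@nz_fact F hch). Qed.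
Lemma nan m : a + m%:R != 0. Proof. exact: (@nz_a F a hch hgA). Qed.
Lemma nank m k : a + m%:R + k%:R != 0. Proof. by rewrite -addrA -natrD nan. Qed.
Lemma na0 : a != 0. Proof. exact: (@nz_a0 F a hch hgA). Qed.

Lemma poch_an n k : poch (a + n%:R) k = (a + n%:R) * poch (1 + a + n%:R) k / (a + n%:R + k%:R).
Proof.
have E1 := pochSl (a + n%:R) k; rewrite pochS in E1.
rewrite (_ : a + n%:R + 1 = 1 + a + n%:R) in E1; last by ring.
by rewrite -E1 mulfK // nank.
Qed.

Lemma harm_ord n (z : F) : harm n z = \sum_(i < n) (z + i.+1%:R)^-1.
Proof. by rewrite /harm big_add1 /= big_mkord. Qed.

Lemma lam_harm n : harm n ((x - 1) / 2%:R) - harm n (- (3%:R / 4%:R)) = lam a n.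
Proof.
rewrite !harm_ord /lam -sumrB; apply: eq_bigr => i _.
congr (_^-1 - _^-1); rewrite natS1; field; by rewrite ?two_nz ?four_nz.
Qed.
Lemma mu_harm n : harm n ((x - 1) / 2%:R) - harm n (- (5%:R / 4%:R)) = mu a n.
Proof.
rewrite !harm_ord /mu -sumrB; apply: eq_bigr => i _.
congr (_^-1 - _^-1); rewrite natS1; field; by rewrite ?two_nz ?four_nz.
Qed.

Lemma nx0 : x * 2%:R + 1 != 0.
Proof. rewrite (_ : x * 2%:R + 1 = 2%:R * a) ?mulf_neq0 ?two_nz ?na0 //. field. exact: two_nz. Qed.
Lemma nx1 n : x * 2%:R + 1 + n%:R * 2%:R != 0.
Proof. rewrite (_ : x * 2%:R + 1 + n%:R * 2%:R = 2%:R * (a + n%:R)) ?mulf_neq0 ?two_nz ?nan //. field. exact: two_nz. Qed.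
Lemma nx2 n k : x * 2%:R + 1 + n%:R * 2%:R + k%:R * 2%:R != 0.
Proof. rewrite (_ : x * 2%:R + 1 + n%:R * 2%:R + k%:R * 2%:R = 2%:R * (a + n%:R + k%:R)) ?mulf_neq0 ?two_nz ?nank //. field. exact: two_nz. Qed.

Lemma summand n k :
     (-1) ^+ k * (('C(n, k))%:R : F)
     * (gbinom (x / 2%:R + k%:R) k * gbinom (x - 1 / 2%:R + k%:R) k)
     / (gbinom ((x - 1) / 2%:R + k%:R) k * gbinom (x - 1 / 2%:R + n%:R + k%:R) k)
     * harm (2 * k) x
  = ((a + 2%:R * n%:R) * (D a n k * hh a k) + a * ((a + 2%:R * k%:R) / a * D a n k * hh a k)) / (4%:R * (a + n%:R)).
Proof.
rewrite signbin' !gbinom_poch harm2.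
rewrite (_ : x / 2%:R + 1 = a / 2%:R + 3%:R / 4%:R); last by field; rewrite ?two_nz ?four_nz.
rewrite (_ : x - 1 / 2%:R + 1 = a); last by field; rewrite ?two_nz ?four_nz.
rewrite (_ : (x - 1) / 2%:R + 1 = a / 2%:R + 1 / 4%:R); last by field; rewrite ?two_nz ?four_nz.
rewrite (_ : x - 1 / 2%:R + n%:R + 1 = a + n%:R); last by field; rewrite ?two_nz ?four_nz.
rewrite poch_an /D. field.
by rewrite two_nz four_nz nx0 nx1 nx2 npe np1a nfact.
Qed.


Lemma LHS_eq n : LHSf n x = ((a + 2%:R * n%:R) * (Dix a n * lam a n) + a * (Dg a n * mu a n)) / (4%:R * (a + n%:R)).
Proof.
rewrite /LHSf (eq_bigr _ (fun k _ => summand n k)) big_mkord -mulr_suml big_split /= -!mulr_sumr.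
have U := @u_closed F a hch hgA n; have V := @v_closed F a hch hgA n.
rewrite /u in U; rewrite /v in V.
by rewrite U V.
Qed.

Lemma npan n : poch (a + n%:R) n != 0.
Proof. by apply: poch_neq0 => i _; apply: nank. Qed.

Lemma pow4 n : (4%:R : F) ^ (n%:Z - 1) = 4%:R ^+ n / 4%:R.
Proof. by rewrite expfzDr // four_nz. Qed.

Lemma RHS_eq n : RHSf n x =
  4%:R ^+ n / 4%:R * (poch ((1 + a) / 2%:R) n * poch (1 / 4%:R) n) / (poch (a / 2%:R + 1 / 4%:R) n * poch (a + n%:R) n) * lam a n
  + 4%:R ^+ n / 4%:R * (poch (a / 2%:R) n * poch (- (1 / 4%:R)) n) / (poch (a / 2%:R + 1 / 4%:R) n * poch (a + n%:R) n) * mu a n.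
Proof.
rewrite /RHSf pow4 lam_harm mu_harm mul2n -addnn natrD addrA !gbinom_poch.
rewrite (_ : x / 2%:R - 1 / 4%:R + 1 = (1 + a) / 2%:R); last by field; rewrite ?two_nz ?four_nz.
rewrite (_ : - (3%:R / 4%:R) + 1 = 1 / 4%:R :> F); last by field; rewrite ?two_nz ?four_nz.
rewrite (_ : (x - 1) / 2%:R + 1 = a / 2%:R + 1 / 4%:R); last by field; rewrite ?two_nz ?four_nz.
rewrite (_ : x - 1 / 2%:R + n%:R + 1 = a + n%:R); last by field; rewrite ?two_nz ?four_nz.
rewrite (_ : x / 2%:R - 3%:R / 4%:R + 1 = a / 2%:R); last by field; rewrite ?two_nz ?four_nz.
rewrite (_ : - (5%:R / 4%:R) + 1 = - (1 / 4%:R) :> F); last by field; rewrite ?two_nz ?four_nz.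
field. by rewrite npan npe four_nz nfact.
Qed.

Lemma panS n : poch (a + n.+1%:R) n.+1 * (a + n%:R) = poch (a + n%:R) n * (a + 2%:R * n%:R) * (a + 2%:R * n%:R + 1).
Proof.
have E1 := pochSl (a + n%:R) n; rewrite pochS in E1.
rewrite (_ : a + n%:R + 1 = a + n.+1%:R) in E1; last by rewrite natS1; ring.
rewrite pochS (_ : poch (a + n.+1%:R) n * (a + n.+1%:R + n%:R) * (a + n%:R) = ((a + n%:R) * poch (a + n.+1%:R) n) * (a + n.+1%:R + n%:R)); last by ring.
rewrite -E1 (natS1 n); ring.
Qed.

Lemma CF1 n : 4%:R ^+ n * poch ((1 + a) / 2%:R) n * poch (1 + a / 2%:R) n * (a + n%:R)
   = (a + 2%:R * n%:R) * poch (1 + a) n * poch (a + n%:R) n.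
Proof.
elim: n => [|n IH]; first by rewrite !poch0 !mulr1 expr0 addr0 mul1r mulr0 addr0.
apply: (mulIf (nan n)).
rewrite [RHS](_ : _ = (a + 2%:R * n.+1%:R) * poch (1 + a) n.+1 * (poch (a + n.+1%:R) n.+1 * (a + n%:R))); last by ring.
rewrite panS.
have -> : 4%:R ^+ n.+1 * poch ((1 + a) / 2%:R) n.+1 * poch (1 + a / 2%:R) n.+1 * (a + n.+1%:R) * (a + n%:R)
   = 4%:R * ((1 + a) / 2%:R + n%:R) * (1 + a / 2%:R + n%:R) * (a + n.+1%:R) * (4%:R ^+ n * poch ((1 + a) / 2%:R) n * poch (1 + a / 2%:R) n * (a + n%:R)).
  by rewrite exprS !pochS; ring.
rewrite IH pochS !natS1. field. exact: two_nz.
Qed.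

Lemma CF2 n : 4%:R ^+ n * poch (a / 2%:R) n * poch ((1 + a) / 2%:R) n * (a + n%:R)
   = a * poch (1 + a) n * poch (a + n%:R) n.
Proof.
elim: n => [|n IH]; first by rewrite !poch0 !mulr1 expr0 addr0 mul1r.
apply: (mulIf (nan n)).
rewrite [RHS](_ : _ = a * poch (1 + a) n.+1 * (poch (a + n.+1%:R) n.+1 * (a + n%:R))); last by ring.
rewrite panS.
have -> : 4%:R ^+ n.+1 * poch (a / 2%:R) n.+1 * poch ((1 + a) / 2%:R) n.+1 * (a + n.+1%:R) * (a + n%:R)
   = 4%:R * (a / 2%:R + n%:R) * ((1 + a) / 2%:R + n%:R) * (a + n.+1%:R) * (4%:R ^+ n * poch (a / 2%:R) n * poch ((1 + a) / 2%:R) n * (a + n%:R)).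
  by rewrite exprS !pochS; ring.
rewrite IH pochS !natS1. field. exact: two_nz.
Qed.

Lemma nx3 n : x * 2%:R + 1 + 2%:R * n%:R * 2%:R != 0.
Proof. rewrite (_ : x * 2%:R + 1 + 2%:R * n%:R * 2%:R = 2%:R * (a + (2 * n)%N%:R)) ?mulf_neq0 ?two_nz ?nan // natrM. field. exact: two_nz. Qed.
Lemma npha n : poch (1 + a / 2%:R) n != 0. Proof. exact: (@nz_pha F a hch hgA). Qed.
Lemma npha2 n : poch ((1 + a) / 2%:R) n != 0. Proof. exact: (@nz_pha2 F a hch hgA). Qed.

Lemma gen_main n : LHSf n x = RHSf n x.
Proof.
rewrite LHS_eq RHS_eq /Dix /Dg mulrDl.
have n2 : a + 2%:R * n%:R != 0.
  by rewrite (_ : a + 2%:R * n%:R = a + (2 * n)%N%:R) ?nan // natrM.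
congr (_ + _).
  have E : poch (1 + a) n = 4%:R ^+ n * poch ((1 + a) / 2%:R) n * poch (1 + a / 2%:R) n * (a + n%:R) / ((a + 2%:R * n%:R) * poch (a + n%:R) n).
    rewrite CF1; field. by rewrite two_nz npan nx3.
  rewrite E. field. by rewrite npan npe four_nz two_nz nx1 npha nx3.
have E : poch (1 + a) n = 4%:R ^+ n * poch (a / 2%:R) n * poch ((1 + a) / 2%:R) n * (a + n%:R) / (a * poch (a + n%:R) n).
  rewrite CF2; field. by rewrite two_nz npan nx0.
rewrite E. field. by rewrite npan npe four_nz two_nz nx1 npha2 nx0.
Qed.

End Main.

Local Notation "x %:F" := (tofrac x) (format "x %:F").

Section Ev.
Variable C : numFieldType.
Variable x0 : C.
Local Notation K := {fraction {poly C}}.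

Definition Ev (u : K) (v : C) := exists p q : {poly C},
  [/\ q.[x0] != 0, u = p%:F / q%:F & v = p.[x0] / q.[x0]].

Lemma qnz (q : {poly C}) : q.[x0] != 0 -> q%:F != 0 :> K.
Proof. by move=> h; rewrite tofrac_eq0; apply: contraNneq h => ->; rewrite horner0. Qed.

Lemma Ev_poly p : Ev (p%:F) p.[x0].
Proof. exists p, 1; split; by rewrite ?hornerC ?oner_neq0 ?tofrac1 ?divr1. Qed.

Lemma Ev_X : Ev ('X%:F) x0.
Proof. by have := Ev_poly 'X; rewrite hornerX. Qed.

Lemma Ev_nat m : Ev (m%:R) (m%:R).
Proof. by have := Ev_poly (m%:R); rewrite rmorph_nat -polyC_natr hornerC. Qed.

Lemma Ev_1 : Ev 1 1.
Proof. by have := Ev_nat 1. Qed.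

Lemma Ev_add u1 v1 u2 v2 : Ev u1 v1 -> Ev u2 v2 -> Ev (u1 + u2) (v1 + v2).
Proof.
move=> [p1 [q1 [h1 -> ->]]] [p2 [q2 [h2 -> ->]]].
exists (p1 * q2 + p2 * q1), (q1 * q2); split.
- by rewrite hornerM mulf_neq0.
- by rewrite tofracD !tofracM addf_div ?qnz.
- by rewrite hornerD !hornerM addf_div.
Qed.

Lemma Ev_mul u1 v1 u2 v2 : Ev u1 v1 -> Ev u2 v2 -> Ev (u1 * u2) (v1 * v2).
Proof.
move=> [p1 [q1 [h1 -> ->]]] [p2 [q2 [h2 -> ->]]].
exists (p1 * p2), (q1 * q2); split.
- by rewrite hornerM mulf_neq0.
- by rewrite !tofracM mulf_div.
- by rewrite !hornerM mulf_div.
Qed.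

Lemma Ev_opp u v : Ev u v -> Ev (- u) (- v).
Proof.
move=> [p [q [h -> ->]]]; exists (- p), q; split => //.
- by rewrite tofracN mulNr.
- by rewrite hornerN mulNr.
Qed.

Lemma Ev_inv u v : Ev u v -> v != 0 -> Ev (u^-1) (v^-1).
Proof.
move=> [p [q [h -> ->]]] hv; exists q, p; split.
- by move: hv; rewrite mulf_eq0 negb_or => /andP[].
- by rewrite invf_div.
- by rewrite invf_div.
Qed.

Lemma Ev_uniq u v1 v2 : Ev u v1 -> Ev u v2 -> v1 = v2.
Proof.
move=> [p1 [q1 [h1 -> ->]]] [p2 [q2 [h2 E ->]]].
move/eqP: E; rewrite eqr_div ?qnz // -!tofracM tofrac_eq => /eqP E.
apply/eqP; rewrite eqr_div // -!hornerM E.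
done.
Qed.

Lemma Ev_exprn u v m : Ev u v -> Ev (u ^+ m) (v ^+ m).
Proof.
move=> h; elim: m => [|m IH]; first by rewrite !expr0; exact: Ev_1.
by rewrite !exprS; apply: Ev_mul.
Qed.

Lemma Ev_exprz u v (z : int) : Ev u v -> v != 0 -> Ev (u ^ z) (v ^ z).
Proof.
move=> h hv; case: z => m /=; first exact: Ev_exprn.
by apply: Ev_inv; [apply: Ev_exprn | rewrite expf_neq0].
Qed.

Lemma Ev_0 : Ev 0 0. Proof. by have := Ev_nat 0. Qed.

Lemma Ev_sum (I : Type) (r : seq I) (P : pred I) (f : I -> K) (g : I -> C) :
  (forall i, P i -> Ev (f i) (g i)) ->
  Ev (\sum_(i <- r | P i) f i) (\sum_(i <- r | P i) g i).
Proof. move=> H; apply: (big_ind2 Ev Ev_0 (@Ev_add)); exact: H. Qed.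

Lemma Ev_prod (I : Type) (r : seq I) (P : pred I) (f : I -> K) (g : I -> C) :
  (forall i, P i -> Ev (f i) (g i)) ->
  Ev (\prod_(i <- r | P i) f i) (\prod_(i <- r | P i) g i).
Proof. move=> H; apply: (big_ind2 Ev Ev_1 (@Ev_mul)); exact: H. Qed.

Lemma Ev_sum_nat m n (f : nat -> K) (g : nat -> C) :
  (forall i, (m <= i < n)%N -> Ev (f i) (g i)) ->
  Ev (\sum_(m <= i < n) f i) (\sum_(m <= i < n) g i).
Proof.
move=> H; rewrite big_nat_cond [X in Ev _ X]big_nat_cond.
by apply: Ev_sum => i /andP[hi _]; apply: H.
Qed.

Lemma Ev_gbinom u v k : Ev u v -> Ev (gbinom u k) (gbinom v k).
Proof.
move=> h; rewrite /gbinom; apply: Ev_mul.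
  by apply: Ev_prod => i _; apply: Ev_add => //; apply: Ev_opp; apply: Ev_nat.
apply: Ev_inv; first exact: Ev_nat.
by rewrite pnatr_eq0 -lt0n fact_gt0.
Qed.

Lemma Ev_harm m u v : Ev u v -> (forall j, (1 <= j <= m)%N -> v + j%:R != 0) ->
  Ev (harm m u) (harm m v).
Proof.
move=> h hj; rewrite /harm; apply: Ev_sum_nat => j /andP[h1 h2].
apply: Ev_inv; first by apply: Ev_add => //; apply: Ev_nat.
by apply: hj; rewrite h1.
Qed.

End Ev.
Arguments Ev {C}.

Local Notation "x %:F" := (tofrac x) (format "x %:F").

Lemma c34 (C : numFieldType) j : (0 < j)%N -> - (3%:R / 4%:R) + j%:R != 0 :> C.
Proof.
case: j => // j _.
rewrite (_ : - (3%:R / 4%:R) + j.+1%:R = (1 + 4 * j)%N%:R / 4%:R :> C).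
  by apply: mulf_neq0; rewrite ?invr_eq0 pnatr_eq0.
rewrite (natS1 j) natrD natrM; by field.
Qed.
Lemma c54 (C : numFieldType) j : (0 < j)%N -> - (5%:R / 4%:R) + j%:R != 0 :> C.
Proof.
case: j => // [[_|j _]].
  rewrite (_ : - (5%:R / 4%:R) + 1%:R = - (1 / 4%:R) :> C); last by field.
  by rewrite oppr_eq0 mulf_neq0 ?oner_neq0 // invr_eq0 pnatr_eq0.
rewrite (_ : - (5%:R / 4%:R) + j.+2%:R = (3 + 4 * j)%N%:R / 4%:R :> C).
  by apply: mulf_neq0; rewrite ?invr_eq0 pnatr_eq0.
rewrite (natS1 j.+1) (natS1 j) natrD natrM; by field.
Qed.

Ltac evt := repeat first [ apply: Ev_X | apply: Ev_1 | apply: Ev_nat | apply: Ev_gbinom | apply: Ev_exprn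
   | apply: Ev_exprz | apply: Ev_add | apply: Ev_mul | apply: Ev_opp | apply: Ev_inv | apply: Ev_harm ].

Local Open Scope complex_scope.

Theorem theorem4 (R : realType) (n : nat) (x : R[i])
  (* no denominator vanishes *)
  (h1 : forall k, (k <= n)%N -> gbinom ((x - 1) / 2%:R + k%:R) k != 0)
  (h2 : forall k, (k <= n)%N -> gbinom (x - 1 / 2%:R + n%:R + k%:R) k != 0)
  (h3 : gbinom ((x - 1) / 2%:R + n%:R) n != 0)
  (h4 : gbinom (x - 1 / 2%:R + (2 * n)%:R) n != 0)
  (h5 : forall j, (1 <= j <= 2 * n)%N -> x + j%:R != 0)
  (h6 : forall j, (1 <= j <= n)%N -> (x - 1) / 2%:R + j%:R != 0) :
  \sum_(0 <= k < n.+1)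
     (-1) ^+ k * (('C(n, k))%:R : R[i])
     * (gbinom (x / 2%:R + k%:R) k * gbinom (x - 1 / 2%:R + k%:R) k)
     / (gbinom ((x - 1) / 2%:R + k%:R) k * gbinom (x - 1 / 2%:R + n%:R + k%:R) k)
     * harm (2 * k) x
  = (4%:R : R[i]) ^ (n%:Z - 1)
     * (gbinom (x / 2%:R - 1 / 4%:R + n%:R) n * gbinom (- (3%:R / 4%:R) + n%:R) n)
     / (gbinom ((x - 1) / 2%:R + n%:R) n * gbinom (x - 1 / 2%:R + (2 * n)%:R) n)
     * (harm n ((x - 1) / 2%:R) - harm n (- (3%:R / 4%:R)))
  + (4%:R : R[i]) ^ (n%:Z - 1)
     * (gbinom (x / 2%:R - 3%:R / 4%:R + n%:R) n * gbinom (- (5%:R / 4%:R) + n%:R) n)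
     / (gbinom ((x - 1) / 2%:R + n%:R) n * gbinom (x - 1 / 2%:R + (2 * n)%:R) n)
     * (harm n ((x - 1) / 2%:R) - harm n (- (5%:R / 4%:R))).
Proof.
change (LHSf n x = RHSf n x).
have e1 : Ev x (LHSf n ('X%:F)) (LHSf n x).
  rewrite /LHSf; apply: Ev_sum_nat => k /andP[_ hk].
  evt.
  all: try (by rewrite pnatr_eq0).
    by rewrite mulf_neq0 ?h1 ?h2.
  move=> j /andP[j1 j2]; apply: h5; rewrite j1 (leq_trans j2) //.
  by rewrite leq_mul2l; apply/orP; right.
have e2 : Ev x (RHSf n ('X%:F)) (RHSf n x).
  rewrite /RHSf. evt.
  all: try (by rewrite pnatr_eq0).
  - by rewrite mulf_neq0.
  - by move=> j hj; apply: h6.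
  - by move=> j /andP[j1 _]; apply: c34.
  - by rewrite mulf_neq0.
  - by move=> j hj; apply: h6.
  - by move=> j /andP[j1 _]; apply: c54.
have hchK : forall m, (m.+1)%:R != 0 :> {fraction {poly R[i]}}.
  move=> m; rewrite -(rmorph_nat (@tofrac {poly R[i]})) tofrac_eq0 -polyC_natr polyC_eq0.
  by rewrite pnatr_eq0.
have hgxK : forall m, 2%:R * ('X%:F : {fraction {poly R[i]}}) + (m.+1)%:R != 0.
  move=> m; rewrite -!(rmorph_nat (@tofrac {poly R[i]})) -tofracM -tofracD tofrac_eq0.
  apply/eqP => H; move: (congr1 (fun p : {poly R[i]} => p.[0]) H).
  rewrite hornerD hornerM hornerX mulr0 add0r horner0 -polyC_natr hornerC => /eqP.
  by rewrite pnatr_eq0.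
have HK := @gen_main _ ('X%:F) hchK hgxK n.
rewrite HK in e1.
exact: (@Ev_uniq _ x _ _ _ e1 e2).
Qed.
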